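(* For any finite alphabet $\mathfrak{G}$, the series $\mathcal{I}(q,t) = \sum_{\mathfrak{s}\preceq\mathfrak{t}} q^{\deg(\mathfrak{s})} t^{\deg(\mathfrak{t})}$ satisfies $\mathcal{I}(q,t) = 1 + t\,\mathcal{R}_\mathfrak{G}\big(\mathcal{I}(q,t) - qt\,\mathcal{R}_\mathfrak{G}(\mathcal{I}(q,t))\big) + qt\,\mathcal{R}_\mathfrak{G}(\mathcal{I}(q,t))$.
   Context: $\mathfrak{G}$ is a finite alphabet (letters with arities $|\mathtt{a}|\geq 1$), and $\mathcal{R}_\mathfrak{G}(t) = \sum_{\mathtt{a}\in\mathfrak{G}} t^{|\mathtt{a}|}$. A $\mathfrak{G}$-tree is either the leaf (the tree with no internal node) or a root decorated by a letter $\mathtt{a}\in\mathfrak{G}$ with $|\mathtt{a}|$ children that are $\mathfrak{G}$-trees; its degree $\deg$ is its number of internal nodes. The $\mathfrak{G}$-prefix poset is the set of $\mathfrak{G}$-trees ordered by $\mathfrak{s}\preceq\mathfrak{t}$ iff $\mathfrak{s}$ is a prefix of $\mathfrak{t}$, i.e. $\mathfrak{t}$ is obtained by grafting some $\mathfrak{G}$-trees onto the leaves of $\mathfrak{s}$. The series $\mathcal{I}(q,t)$ enumerates all intervals $[\mathfrak{s},\mathfrak{t}]$ of this poset, the sum ranging over all pairs of $\mathfrak{G}$-trees with $\mathfrak{s}\preceq\mathfrak{t}$. *)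

(* Defs.v *)
From mathcomp Require Import all_boot all_order all_algebra.
From Stdlib Require Import List.
Set Implicit Arguments. Unset Strict Implicit. Unset Printing Implicit Defensive.
Import Order.TTheory GRing.Theory Num.Theory.

(* A raw tree is a Leaf or a Node decorated by a letter with a list of children;
   a G-tree is a raw tree satisfying [gwf ar] (each node labelled by a has
   exactly ar a children). *)
Inductive gtree (A : Type) : Type :=
| Leaf : gtree A
| Node : A -> list (gtree A) -> gtree A.
Arguments Leaf {A}.

Inductive gwf (A : Type) (ar : A -> nat) : gtree A -> Prop :=
| gwf_leaf : gwf ar Leaf
| gwf_node : forall a cs, size cs = ar a -> List.Forall (gwf ar) cs ->
    gwf ar (Node a cs).

Fixpoint deg (A : Type) (t : gtree A) : nat :=
  match t with
  | Leaf => 0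
  | Node _ cs => (sumn (map (@deg A) cs)).+1
  end.

(* s is a prefix of t: t is obtained from s by grafting trees on leaves of s *)
Inductive prefix (A : Type) : gtree A -> gtree A -> Prop :=
| prefix_leaf : forall t, prefix Leaf t
| prefix_node : forall a cs ds, List.Forall2 (@prefix A) cs ds ->
    prefix (Node a cs) (Node a ds).

Definition counts (T : Type) (P : T -> Prop) (k : nat) : Prop :=
  exists l : list T, List.NoDup l /\ (forall x, List.In x l <-> P x)
                     /\ length l = k.

Definition interval_mn (A : Type) (ar : A -> nat) (m n : nat)
  (p : gtree A * gtree A) : Prop :=
  gwf ar p.1 /\ gwf ar p.2 /\ prefix p.1 p.2 /\ deg p.1 = m /\ deg p.2 = n.

(* Formal power series in q,t with integer coefficients: F m n is the
   coefficient of q^m t^n. *)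
Definition fps := nat -> nat -> int.

Local Open Scope ring_scope.

Definition fps_one : fps := fun m n => if (m == 0%N) && (n == 0%N) then 1 else 0.
Definition fps_add (F G : fps) : fps := fun m n => F m n + G m n.
Definition fps_sub (F G : fps) : fps := fun m n => F m n - G m n.
Definition fps_mul (F G : fps) : fps := fun m n =>
  \sum_(i < m.+1) \sum_(j < n.+1) F i j * G (m - i)%N (n - j)%N.
Fixpoint fps_pow (F : fps) (k : nat) : fps :=
  match k with 0 => fps_one | k'.+1 => fps_mul F (fps_pow F k') end.
Definition fps_mulT (F : fps) : fps := fun m n =>
  if n is n'.+1 then F m n' else 0.
Definition fps_mulQT (F : fps) : fps := fun m n =>
  match m, n with m'.+1, n'.+1 => F m' n' | _, _ => 0 end.
Definition fps_R (A : finType) (ar : A -> nat) (F : fps) : fps := fun m n =>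
  \sum_(a : A) fps_pow F (ar a) m n.

(* Main.v *)
From Stdlib Require Import List Lia.
Require Import Defs.
From mathcomp Require Import all_boot all_order all_algebra.
From mathcomp Require Import zify.
Set Implicit Arguments. Unset Strict Implicit. Unset Printing Implicit Defensive.


Section Counts.

Lemma counts_ext (X : Type) (P Q : X -> Prop) k :
  counts P k -> (forall x, P x <-> Q x) -> counts Q k.
Proof.
move=> [l [H1 [H2 H3]]] E; exists l; split => //; split => // x.
by rewrite H2 E.
Qed.

Lemma counts_empty (X : Type) (P : X -> Prop) :
  (forall x, ~ P x) -> counts P 0.
Proof. move=> H; exists nil; split; first constructor.
split => // x; split; [by [] | by move/H]. Qed.

Lemma counts_single (X : Type) (x0 : X) : counts (fun y => y = x0) 1.
Proof. exists (x0 :: nil); split; first by constructor => //; constructor.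
split => // x /=; split; [by case | by move=> ->; left]. Qed.

Lemma counts_or (X : Type) (P Q : X -> Prop) a b :
  counts P a -> counts Q b -> (forall x, P x -> Q x -> False) ->
  counts (fun x => P x \/ Q x) (a + b).
Proof.
move=> [l1 [N1 [I1 L1]]] [l2 [N2 [I2 L2]]] D.
exists (l1 ++ l2); split.
  apply: NoDup_app => // x /I1 Px /I2 Qx; exact: D Px Qx.
split; last by rewrite length_app L1 L2.
by move=> x; rewrite in_app_iff I1 I2.
Qed.

Lemma counts_seqsum (Ix : eqType) (X : Type) (P : Ix -> X -> Prop) (c : Ix -> nat)
  (s : seq Ix) : uniq s -> (forall i, i \in s -> counts (P i) (c i)) ->
  (forall i i' x, P i x -> P i' x -> i = i') ->
  counts (fun x => exists i, i \in s /\ P i x) (\sum_(i <- s) c i).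
Proof.
move=> U C D; elim: s U C => [|i0 s IH] /= U C.
  rewrite big_nil; apply: counts_empty => x [i [] //].
rewrite big_cons; move/andP: U => [ni U].
apply: (@counts_ext _ (fun x => P i0 x \/ exists i, i \in s /\ P i x)).
  apply: counts_or; first by apply: C; rewrite inE eqxx.
    by apply: IH => // i Hi; apply: C; rewrite inE Hi orbT.
  move=> x Px [i [Hi Pix]]; have E := D _ _ _ Px Pix; subst.
  by rewrite Hi in ni.
move=> x; split.
  by case=> [Px|[i [Hi Pix]]]; [exists i0; rewrite inE eqxx | exists i; rewrite inE Hi orbT].
move=> [i [Hi Pix]]; move: Hi; rewrite inE => /orP [/eqP E|Hi].
  by subst; left. by right; exists i.
Qed.

Lemma counts_fin (T : finType) (X : Type) (P : T -> X -> Prop) (c : T -> nat) :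
  (forall i, counts (P i) (c i)) ->
  (forall i i' x, P i x -> P i' x -> i = i') ->
  counts (fun x => exists i, P i x) (\sum_(i : T) c i).
Proof.
move=> C D.
apply: (@counts_ext _ (fun x => exists i, i \in index_enum T /\ P i x)).
  apply: counts_seqsum => //; exact: index_enum_uniq.
move=> x; split; first by move=> [i [_ H]]; exists i.
by move=> [i H]; exists i; rewrite mem_index_enum.
Qed.

Lemma NoDup_map_in (X Y : Type) (f : X -> Y) (l : list X) :
  NoDup l -> (forall x y, List.In x l -> List.In y l -> f x = f y -> x = y) ->
  NoDup (List.map f l).
Proof.
elim: l => [|x l IH] /=; first by constructor.
move=> /NoDup_cons_iff [nx N] inj; constructor.
  move/in_map_iff => [y [E Hy]].
  have := inj y x (or_intror Hy) (or_introl erefl) E => Eyx; subst; exact: nx Hy.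
by apply: IH => // u v Hu Hv; apply: inj; right.
Qed.

Lemma counts_map (X Y : Type) (P : X -> Prop) (f : X -> Y) a :
  counts P a -> (forall x y, P x -> P y -> f x = f y -> x = y) ->
  counts (fun z => exists x, P x /\ z = f x) a.
Proof.
move=> [l [N [I L]]] inj; exists (List.map f l); split.
  apply: NoDup_map_in => // x y /I Px /I Py; exact: inj.
split; last by rewrite length_map.
move=> z; rewrite in_map_iff; split.
  by move=> [x [E Hx]]; exists x; split; [apply/I|].
by move=> [x [Px E]]; exists x; split => //; apply/I.
Qed.

Lemma counts_cons (X : Type) (P : X -> Prop) (Q : list X -> Prop) a b :
  counts P a -> counts Q b ->
  counts (fun l => exists x l', l = x :: l' /\ P x /\ Q l') (a * b).
Proof.
move=> [lp [Np [Ip Lp]]] [lq [Nq [Iq Lq]]].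
exists (flat_map (fun x => List.map (cons x) lq) lp); split.
  clear Ip Lp; elim: lp Np => [|x lp IH] /=; first by constructor.
  move=> /NoDup_cons_iff [nx N]; apply: NoDup_app.
  - apply: NoDup_map_in => // u v _ _ [] //.
  - exact: IH.
  - move=> l /in_map_iff [l' [<- _]] /in_flat_map [y [Hy /in_map_iff [l'' [E _]]]].
    by case: E => E _; subst; apply: nx.
split.
  move=> l; rewrite in_flat_map; split.
    move=> [x [Hx /in_map_iff [l' [<- Hl']]]]; exists x, l'; split => //.
    by split; [apply/Ip|apply/Iq].
  move=> [x [l' [-> [Px Ql']]]]; exists x; split; first by apply/Ip.
  by apply/in_map_iff; exists l'; split => //; apply/Iq.
rewrite -Lp -Lq; clear Np Ip Lp; elim: lp => [|x lp IH] //=.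
by rewrite length_app length_map IH.
Qed.

End Counts.


Fixpoint npow (F : nat -> nat -> nat) (k m n : nat) {struct k} : nat :=
  match k with
  | 0 => ((m == 0) && (n == 0) : nat)
  | k'.+1 => \sum_(i < m.+1) \sum_(j < n.+1) F i j * npow F k' (m - i) (n - j)
  end.

Fixpoint Jr (A : finType) (ar : A -> nat) (n : nat) : nat -> nat -> nat :=
  match n with
  | 0 => fun m j => ((m == 0) && (j == 0) : nat)
  | n'.+1 => fun m j => if j <= n' then Jr ar n' m j
                        else \sum_(a : A) npow (Jr ar n') (ar a) m.-1 n'
  end.

Definition J (A : finType) (ar : A -> nat) m n := Jr ar n m n.

Lemma npow_ext F G N : (forall i j, j <= N -> F i j = G i j) ->
  forall k m n, n <= N -> npow F k m n = npow G k m n.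
Proof.
move=> E; elim=> [|k IH] m n Hn //=.
apply: eq_bigr => i _; apply: eq_bigr => j _.
rewrite E; last by have := ltn_ord j; lia.
by rewrite IH //; lia.
Qed.

Lemma Jr_J (A : finType) (ar : A -> nat) n m j : j <= n -> Jr ar n m j = J ar m j.
Proof.
elim: n m j => [|n IH] m j Hj.
  by have -> : j = 0 by lia.
rewrite /=; case: ifP => Hjn; first by rewrite IH.
have -> : j = n.+1 by lia.
by rewrite /J /= ltnn.
Qed.

Lemma J0 (A : finType) (ar : A -> nat) m : J ar m 0 = (m == 0) :> nat.
Proof. by rewrite /J /= andbT. Qed.

Lemma JS (A : finType) (ar : A -> nat) m n :
  J ar m n.+1 = \sum_(a : A) npow (J ar) (ar a) m.-1 n.
Proof.
rewrite /J /= ltnn; apply: eq_bigr => a _.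
by apply: (npow_ext (N := n)) => // i j Hj; rewrite Jr_J.
Qed.

Definition TI (A : Type) (ar : A -> nat) k m n (l : list (gtree A * gtree A)) :=
  size l = k /\
  List.Forall (fun p : gtree A * gtree A => gwf ar p.1 /\ gwf ar p.2 /\ Defs.prefix p.1 p.2) l /\
  sumn (map (fun p => deg p.1) l) = m /\ sumn (map (fun p => deg p.2) l) = n.

Lemma TI0 (A : Type) (ar : A -> nat) m n l :
  TI ar 0 m n l <-> l = nil /\ m = 0 /\ n = 0.
Proof.
split; first by case: l => [|x l] [//= _ [_ [<- <-]]].
by move=> [-> [-> ->]]; split => //; split => //; constructor.
Qed.

Lemma TIS (A : Type) (ar : A -> nat) k m n l :
  TI ar k.+1 m n l <-> exists (i : 'I_m.+1) (j : 'I_n.+1), exists x l',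
     l = x :: l' /\ interval_mn ar i j x /\ TI ar k (m - i) (n - j) l'.
Proof.
split.
  case: l => [|x l] [//= [Hs] [/Forall_cons_iff [[g1 [g2 p]] F] [Hm Hn]]].
  have Hi : deg x.1 < m.+1 by lia.
  have Hj : deg x.2 < n.+1 by lia.
  exists (Ordinal Hi), (Ordinal Hj), x, l; split => //; split.
    by split => //; split => //; split.
  split => //; split => //=; split; lia.
move=> [i [j [x [l' [-> [[g1 [g2 [p [d1 d2]]]] [Hs [F [Hm Hn]]]]]]]]].
split; first by rewrite /= Hs.
split; first by constructor.
have := ltn_ord i; have := ltn_ord j => Hj Hi.
split => /=; lia.
Qed.

Lemma TI_counts (A : finType) (ar : A -> nat) N :
  (forall i j, j <= N -> counts (interval_mn ar i j) (J ar i j)) ->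
  forall k m n, n <= N -> counts (TI ar k m n) (npow (J ar) k m n).
Proof.
move=> H; elim=> [|k IH] m n Hn.
  rewrite /=; case: (boolP ((m == 0) && (n == 0))) => [/andP [/eqP -> /eqP ->]|E].
    apply: counts_ext; first exact: (counts_single nil).
    by move=> l; rewrite TI0; split => [->|[->]].
  apply: counts_empty => l /TI0 [_ [Em En]]; move: E; rewrite Em En.
  by rewrite eqxx.
apply: (@counts_ext _ (fun l => exists (i : 'I_m.+1) (j : 'I_n.+1), exists x l',
  l = x :: l' /\ interval_mn ar i j x /\ TI ar k (m - i) (n - j) l')); last by move=> l; rewrite TIS.
apply: counts_fin; last first.
  move=> i i' l [j [x [l' [El [[_ [_ [_ [d1 _]]]] _]]]]].
  move=> [j' [x' [l'' [El' [[_ [_ [_ [d1' _]]]] _]]]]].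
  by apply: ord_inj; rewrite -d1 -d1'; subst; case: El' => ->.
move=> i /=; apply: counts_fin; last first.
  move=> j j' l [x [l' [El [[_ [_ [_ [_ d2]]]] _]]]].
  move=> [x' [l'' [El' [[_ [_ [_ [_ d2']]]] _]]]].
  by apply: ord_inj; rewrite -d2 -d2'; subst; case: El' => ->.
move=> j; apply: counts_cons.
  apply: H; have := ltn_ord j; lia.
apply: IH; lia.
Qed.


Lemma Forall_mapE (X Y : Type) (P : Y -> Prop) (f : X -> Y) l :
  List.Forall P (map f l) <-> List.Forall (fun x => P (f x)) l.
Proof.
elim: l => [|x l IH] /=; first by split => _; constructor.
by rewrite !Forall_cons_iff IH.
Qed.

Lemma Forall_weak (X : Type) (P Q : X -> Prop) l :
  (forall x, P x -> Q x) -> List.Forall P l -> List.Forall Q l.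
Proof. move=> H; elim=> [|x l' Px _ IH]; constructor; auto. Qed.

Lemma Forall2_of (X Y : Type) (R : X -> Y -> Prop) (l : list (X * Y)) :
  List.Forall (fun p => R p.1 p.2) l -> List.Forall2 R (map fst l) (map snd l).
Proof. elim=> [|x l' Rx _ IH] /=; constructor => //. Qed.

Lemma Forall_zip (X Y : Type) (R : X -> Y -> Prop) P Q cs ds :
  List.Forall2 R cs ds -> List.Forall P cs -> List.Forall Q ds ->
  List.Forall (fun p => P p.1 /\ Q p.2 /\ R p.1 p.2) (zip cs ds) /\ size cs = size ds.
Proof.
elim=> [|c d cs' ds' Rcd _ IH] /=; first by split => //; constructor.
move=> /Forall_cons_iff [Pc Fc] /Forall_cons_iff [Qd Fd].
have [IH1 IH2] := IH Fc Fd; split; last by rewrite IH2.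
by constructor.
Qed.

Lemma sum0_leaf (A : Type) (l : list (gtree A * gtree A)) :
  sumn (map (fun p => deg p.1) l) = 0 -> forall p, List.In p l -> p.1 = Leaf.
Proof.
elim: l => [|x l IH] //= H p [<-|Hp]; last by apply: IH => //; lia.
by case: x H => [[|a cs] t] //=.
Qed.

Lemma pairs_inj (X Y : Type) (l l' : list (X * Y)) :
  map fst l = map fst l' -> map snd l = map snd l' -> l = l'.
Proof.
elim: l l' => [|[x y] l IH] [|[x' y'] l'] //= [-> E1] [-> E2].
by rewrite (IH l').
Qed.

Lemma leaf_inj (A : Type) (l l' : list (gtree A * gtree A)) :
  (forall p, List.In p l -> p.1 = Leaf) -> (forall p, List.In p l' -> p.1 = Leaf) ->
  map snd l = map snd l' -> l = l'.
Proof.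
elim: l l' => [|[x y] l IH] [|[x' y'] l'] //= H H' [-> E].
have /= -> := H _ (or_introl erefl); have /= -> := H' _ (or_introl erefl).
by rewrite (IH l') // => p Hp; [apply: H | apply: H']; right.
Qed.

Lemma lmapE (X Y : Type) (f : X -> Y) l : List.map f l = map f l.
Proof. by elim: l => //= x l ->. Qed.

Definition mk (A : Type) m (a : A) (l : list (gtree A * gtree A)) :=
  (if m is 0 then Leaf else Node a (map fst l), Node a (map snd l)).

Lemma int_base (A : Type) (ar : A -> nat) i p :
  interval_mn ar i 0 p <-> p = (Leaf, Leaf) /\ i = 0.
Proof.
split; last by move=> [-> ->]; split; first constructor; split; first constructor;
  split => //; constructor.
case: p => s t; rewrite /interval_mn /= => -[g1 [g2 [pr [d1 d2]]]].
case: t d2 g2 pr => [|a ds] //= _ _ pr.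
inversion pr; subst; by [].
Qed.

Lemma int_S (A : Type) (ar : A -> nat) m n p :
  interval_mn ar m n.+1 p <-> exists a, exists l, TI ar (ar a) m.-1 n l /\ p = mk m a l.
Proof.
split.
  case: p => s t; rewrite /interval_mn /= => -[g1 [g2 [pr [d1 d2]]]].
  case: t d2 g2 pr => [|a ds] //= [d2] g2 pr.
  inversion g2 as [|a' ds' Hs Fds]; subst.
  inversion pr as [t|a' cs ds' F2]; subst.
    exists a, (map (fun d => (Leaf, d)) ds); split; last first.
      by rewrite /mk /=; congr (_, Node _ _); elim: (ds) => //= d ds0 <-.
    split; first by rewrite size_map.
    split; first by apply/Forall_mapE; apply: Forall_weak Fds => d gd;
      split; first constructor; split => //; constructor.
    split; first by rewrite -map_comp /=; elim: (ds) => //= d ds0 ->.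
    by rewrite -map_comp.
  inversion g1 as [|a' cs' Hc Fcs]; subst.
  have [Fz Es] := Forall_zip F2 Fcs Fds.
  exists a, (zip cs ds); split; last first.
    by rewrite /mk -/unzip1 -/unzip2 unzip1_zip ?Es // unzip2_zip ?Es.
  split; first by rewrite size_zip Es minnn.
  split; first by apply: Forall_weak Fz => q [? [? ?]].
  have Z1 : unzip1 (zip cs ds) = cs by rewrite unzip1_zip ?Es.
  have Z2 : unzip2 (zip cs ds) = ds by rewrite unzip2_zip ?Es.
  split; first by transitivity (sumn (map (@deg _) (unzip1 (zip cs ds))));
    [rewrite -map_comp | rewrite Z1].
  by transitivity (sumn (map (@deg _) (unzip2 (zip cs ds))));
    [rewrite -map_comp | rewrite Z2].
move=> [a [l [[Hs [F [Hm Hn]]] ->]]].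
have Ft : gwf ar (Node a (map snd l)).
  constructor; first by rewrite size_map.
  by apply/Forall_mapE; apply: Forall_weak F => q [? [? ?]].
have dt : deg (Node a (map snd l)) = n.+1.
  by rewrite /= lmapE -map_comp Hn.
case: m Hm => [|m] Hm /=.
  split; first constructor; split => //; split; first constructor; by split.
split.
  constructor; first by rewrite size_map.
  by apply/Forall_mapE; apply: Forall_weak F => q [? [? ?]].
split => //; split.
  constructor; apply: Forall2_of; by apply: Forall_weak F => q [? [? ?]].
by split => //=; rewrite lmapE -map_comp Hm.
Qed.

Lemma int_counts (A : finType) (ar : A -> nat) n :
  forall i, counts (interval_mn ar i n) (J ar i n).
Proof.
elim: n {-2}n (leqnn n) => [|N IH] n Hn i.
  have -> : n = 0 by lia.
  rewrite J0; case: (boolP (i == 0)) => [/eqP ->|Ei].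
    by apply: counts_ext; first exact: (counts_single (Leaf, Leaf));
      move=> p; rewrite int_base; split => [->|[->]].
  by apply: counts_empty => p /int_base [_ E]; rewrite E in Ei.
case: n Hn => [|n] Hn; first by apply: IH.
rewrite JS.
apply: (@counts_ext _ (fun p => exists a, exists l, TI ar (ar a) i.-1 n l /\ p = mk i a l));
  last by move=> p; rewrite int_S.
apply: counts_fin; last first.
  by move=> a a' p [l [_ ->]] [l' [_ []]]; case: i => [|i] _ [].
move=> a; apply: counts_map.
  apply: (TI_counts (N := n)) => // i' j Hj; apply: IH; lia.
move=> l l' [_ [_ [Hm _]]] [_ [_ [Hm' _]]]; rewrite /mk; case: i Hm Hm' => [|i] Hm Hm'.
  by case=> E; apply: leaf_inj => //; apply: sum0_leaf.
by case=> E1 E2; apply: pairs_inj.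
Qed.

Import Order.TTheory GRing.Theory Num.Theory.

Lemma npow_cast (F : nat -> nat -> nat) k m n :
  ((npow F k m n)%:Z = fps_pow (fun i j => (F i j)%:Z) k m n)%R.
Proof.
elim: k m n => [|k IH] m n /=.
  by rewrite /fps_one; case: (_ && _).
rewrite /fps_mul (big_morph Posz PoszD (erefl _)); apply: eq_bigr => i _.
rewrite (big_morph Posz PoszD (erefl _)); apply: eq_bigr => j _.
by rewrite PoszM IH.
Qed.

Local Open Scope ring_scope.

Lemma pow_row0 (F G : fps) : (forall j, G 0%N j = F 0%N j) -> (forall i j, G i.+1 j = 0) ->
  forall k m n, fps_pow G k m n = if m is 0 then fps_pow F k 0 n else 0.
Proof.
move=> H0 H1; elim=> [|k IH] m n /=.
  by case: m.
rewrite /fps_mul; case: m => [|m].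
  rewrite !big_ord1; apply: eq_bigr => j _.
  by rewrite H0 IH.
rewrite big1 // => i _; apply: big1 => j _.
case: (unliftP ord0 i) => [i'|] -> /=.
  by rewrite H1 mul0r.
by rewrite IH mulr0.
Qed.

Local Close Scope ring_scope.

Import Order.TTheory GRing.Theory Num.Theory.

Theorem proposition3p13 (A : finType) (ar : A -> nat)
  (ar_pos : forall a : A, (0 < ar a)%N) :
  exists I : nat -> nat -> nat,
    (forall m n : nat, counts (interval_mn ar m n) (I m n)) /\
    let II : fps := fun m n => ((I m n)%:Z)%R in
    forall m n : nat,
      II m n =
      fps_add (fps_add fps_one
                 (fps_mulT (fps_R ar (fps_sub II (fps_mulQT (fps_R ar II))))))
              (fps_mulQT (fps_R ar II)) m n.
Proof.
exists (J ar); split; first by move=> m n; apply: int_counts.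
move=> II.
have RII : forall i j, fps_R ar II i j = (((\sum_(a : A) npow (J ar) (ar a) i j)%N)%:Z)%R.
  move=> i j; rewrite /fps_R (big_morph Posz PoszD (erefl _)).
  by apply: eq_bigr => a _; rewrite npow_cast.
set D := fps_sub II (fps_mulQT (fps_R ar II)).
have D0 : forall j, D 0%N j = II 0%N j by move=> j; rewrite /D /fps_sub /fps_mulQT subr0.
have D1 : forall i j, D i.+1 j = 0%R.
  move=> i [|j]; rewrite /D /fps_sub /fps_mulQT.
    by rewrite /II J0 subr0.
  by rewrite RII /II JS subrr.
have PD := pow_row0 D0 D1.
move=> m n; rewrite /fps_add /fps_mulT /fps_mulQT /fps_one.
case: n => [|n].
  by rewrite /II J0 !addr0; case: m.
rewrite /fps_R.
under eq_bigr do rewrite PD.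
case: m => [|m].
  by rewrite add0r addr0 -/(fps_R ar II 0%N n) RII /II JS.
rewrite /= big1 // !add0r -/(fps_R ar II m n) RII /II JS.
by [].
Qed.
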